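(* Assume $p>2$. Let $\phi$ be a quasilinear $p$-form over $F$ with $1\in D(\phi)$ and let $L$ be a field extension of $F$. Suppose there exist a polynomial $P\in F^p[T]$ in one variable with $2\le\deg P<p$ and an element $\alpha\in D(\phi_L)\setminus\{0\}$ such that $\alpha P(b)\in D(\phi_L)$ for all $b\in D(\phi)$. Then $(\phi_L)_{an}$ is a quasi-Pfister $p$-form.
   Context: Let $p$ be a prime and $F$ a field of characteristic $p$; $F^p=\{x^p:x\in F\}$. A quasilinear $p$-form over a field $K$ of characteristic $p$ is a map $\phi\colon V\to K$ on a nonzero finite-dimensional $K$-vector space, homogeneous of degree $p$ and additive; equivalently $\phi\simeq\langle a_1,\dots,a_n\rangle\colon(\lambda_i)\mapsto\sum a_i\lambda_i^p$. $D(\phi)=\{\phi(v)\}$; $\phi_L$ is the scalar extension. $\phi_{an}$ is the unique (up to isomorphism) anisotropic form (no nonzero isotropic vectors) with $D(\phi_{an})=D(\phi)$. An $n$-fold quasi-Pfister $p$-form is $\bigotimes_{i=1}^n\langle1,a_i,\dots,a_i^{p-1}\rangle$ ($n\ge0$, 0-fold: $\langle1\rangle$). *)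

(* Defs.v *)
From HB Require Import structures.
From mathcomp Require Import all_boot all_order all_algebra.
Set Implicit Arguments. Unset Strict Implicit. Unset Printing Implicit Defensive.
Import Order.TTheory GRing.Theory.
Local Open Scope ring_scope.

(* A quasilinear p-form is represented (up to isometry) by its diagonal
   coefficient list a = [:: a_1; ...; a_n], i.e. <a_1,...,a_n> :
   (lambda_i) |-> sum_i a_i * lambda_i^p on K^n (n = size a). *)

Definition qform (p : nat) (K : fieldType) (a : seq K) (v : 'rV[K]_(size a)) : K :=
  \sum_(i < size a) a`_i * (v 0 i) ^+ p.

Definition qvalue (p : nat) (K : fieldType) (a : seq K) (x : K) : Prop :=
  exists v : 'rV[K]_(size a), qform p v = x.

Definition qaniso (p : nat) (K : fieldType) (a : seq K) : Prop :=
  forall v : 'rV[K]_(size a), qform p v = 0 -> v = 0.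

Definition qisometric (p : nat) (K : fieldType) (a b : seq K) : Prop :=
  exists M : 'M[K]_(size a, size b),
    [/\ row_free M, row_full M &
        forall v : 'rV[K]_(size a), qform p (v *m M) = qform p v].

(* the k-fold quasi-Pfister p-form  <<s_1,...,s_k>> =
   (x)_i <1, s_i, ..., s_i^(p-1)>  (0-fold: <1>) *)
Definition qpfister (p : nat) (K : fieldType) (s : seq K) : seq K :=
  foldr (fun a acc => [seq c * a ^+ j | c <- acc, j <- iota 0 p]) [:: 1] s.

Definition qext (F L : fieldType) (iota : {rmorphism F -> L}) (a : seq F) : seq L :=
  map iota a.

(* Main.v *)
From Stdlib Require Import Setoid Classical.
Require Import Defs.
From HB Require Import structures.
From mathcomp Require Import all_boot all_order all_algebra.
From mathcomp Require Import ring zify.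
Set Implicit Arguments. Unset Strict Implicit. Unset Printing Implicit Defensive.
Import GRing.Theory.
Local Open Scope ring_scope.

Lemma nat_choice (T : Type) (x0 : T) n (P : nat -> T -> Prop) :
  (forall j, (j < n)%N -> exists y, P j y) ->
  exists f : nat -> T, forall j, (j < n)%N -> P j (f j).
Proof.
move=> H.
have H' : forall j : 'I_n, exists y, P j y by move=> j; exact: H (ltn_ord j).
have [f Hf] := fin_all_exists H'.
exists (fun j => if insub j is Some j' then f j' else x0) => j hj.
by rewrite (insubT (fun k => k < n)%N hj) /=; exact: (Hf (Ordinal hj)).
Qed.

Section Gen.
Variables (K : fieldType) (p : nat).
Hypothesis hpK : p \in [pchar K].

Lemma p_prime : prime p. Proof. exact: pcharf_prime hpK. Qed.
Lemma p_gt0 : (0 < p)%N. Proof. exact: prime_gt0 p_prime. Qed.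

Lemma frobD (x y : K) : (x + y) ^+ p = x ^+ p + y ^+ p.
Proof. by rewrite -!(pFrobenius_autE hpK) rmorphD. Qed.
Lemma frobN (x : K) : (- x) ^+ p = - x ^+ p.
Proof. by rewrite -!(pFrobenius_autE hpK) rmorphN. Qed.
Lemma frob0 : (0 : K) ^+ p = 0.
Proof. by rewrite expr0n eqn0Ngt p_gt0. Qed.
Lemma frob_nat n : (n%:R : K) ^+ p = n%:R.
Proof. by rewrite -(pFrobenius_autE hpK) rmorph_nat. Qed.
Lemma frob_sum I (r : seq I) (P : pred I) (F : I -> K) :
  (\sum_(i <- r | P i) F i) ^+ p = \sum_(i <- r | P i) F i ^+ p.
Proof. by rewrite -(pFrobenius_autE hpK) rmorph_sum; by apply: eq_bigr. Qed.
Lemma frob_eq0 (x : K) : (x ^+ p == 0) = (x == 0).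
Proof. by rewrite expf_eq0 p_gt0. Qed.

Definition spanv (a : seq K) (x : K) :=
  exists mu : nat -> K, x = \sum_(i < size a) a`_i * mu i ^+ p.
Definition indep (a : seq K) :=
  forall mu : nat -> K, \sum_(i < size a) a`_i * mu i ^+ p = 0 ->
    forall i, (i < size a)%N -> mu i = 0.
Definition pclosed (S : K -> Prop) :=
  [/\ S 0, (forall x y, S x -> S y -> S (x + y)) & (forall c x, S x -> S (c ^+ p * x))].

Lemma qvalueE a x : qvalue p a x <-> spanv a x.
Proof.
split.
- case=> v <-; exists (fun i => if insub i is Some j then v 0 j else 0).
  by rewrite /qform; apply: eq_bigr => i _; rewrite valK.
- case=> mu ->; exists (\row_i mu i).
  by rewrite /qform; apply: eq_bigr => i _; rewrite mxE.
Qed.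

Lemma qanisoE a : qaniso p a <-> indep a.
Proof.
split.
- move=> H mu hmu i hi.
  have := H (\row_(j < size a) mu j); rewrite /qform.
  have -> : \sum_(i < size a) a`_i * (\row_(j < size a) mu j) 0 i ^+ p = 0.
    by rewrite -[RHS]hmu; apply: eq_bigr => j _; rewrite mxE.
  move=> /(_ erefl) /rowP /(_ (Ordinal hi)); rewrite !mxE //.
- move=> H v hv; apply/rowP => j; rewrite mxE.
  have := H (fun i => if insub i is Some j then v 0 j else 0).
  have -> : \sum_(i < size a) a`_i * (if insub (val i) is Some j then v 0 j else 0) ^+ p = 0.
    by rewrite -[RHS]hv /qform; apply: eq_bigr => i _; rewrite valK.
  by move=> /(_ erefl j (ltn_ord j)); rewrite valK.
Qed.

Lemma spanv_nil x : spanv [::] x <-> x = 0.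
Proof. by split=> [[mu ->]|->]; [rewrite big_ord0 | exists (fun _ => 0); rewrite big_ord0]. Qed.

Lemma spanv_cons c a x :
  spanv (c :: a) x <-> exists l z, spanv a z /\ x = c * l ^+ p + z.
Proof.
split.
- case=> mu ->; rewrite /= big_ord_recl /=.
  exists (mu 0%N), (\sum_(i < size a) a`_i * mu i.+1 ^+ p); split=> //.
  by exists (fun i => mu i.+1).
- case=> l [z [[mu ->] ->]].
  exists (fun i => if i is i'.+1 then mu i' else l).
  by rewrite /= big_ord_recl.
Qed.

Lemma spanv_cat a b x :
  spanv (a ++ b) x <-> exists y z, [/\ spanv a y, spanv b z & x = y + z].
Proof.
elim: a x => [|c a IH] x /=.
  split=> [H|[y [z [/spanv_nil -> H ->]]]]; last by rewrite add0r.
  by exists 0, x; split => //; [exact/spanv_nil | rewrite add0r].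
rewrite spanv_cons; split.
- case=> l [z [/IH [y1 [z1 [h1 h2 ->]]] ->]].
  exists (c * l ^+ p + y1), z1; split=> //; last by rewrite addrA.
  by apply/spanv_cons; exists l, y1.
- case=> y [z [/spanv_cons [l [y1 [h1 ->]]] h2 ->]].
  exists l, (y1 + z); split; last by rewrite addrA.
  by apply/IH; exists y1, z.
Qed.

Lemma spanv_closed a : pclosed (spanv a).
Proof.
split.
- by exists (fun _ => 0); rewrite big1 // => i _; rewrite frob0 mulr0.
- move=> x y [m1 ->] [m2 ->]; exists (fun i => m1 i + m2 i).
  by rewrite -big_split; apply: eq_bigr => i _; rewrite frobD mulrDr.
- move=> c x [m ->]; exists (fun i => c * m i).
  by rewrite mulr_sumr; apply: eq_bigr => i _; rewrite exprMn mulrCA.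
Qed.

Lemma pclosedN S x : pclosed S -> S x -> S (- x).
Proof.
case=> _ _ hZ hx; have := hZ (-1) x hx.
by rewrite frobN expr1n mulN1r.
Qed.

Lemma pclosedB S x y : pclosed S -> S x -> S y -> S (x - y).
Proof. by move=> hS hx hy; case: (hS) => _ hD _; apply: hD => //; apply: pclosedN. Qed.

Lemma pclosed_sum S I (r : seq I) (P : pred I) (F : I -> K) :
  pclosed S -> (forall i, P i -> S (F i)) -> S (\sum_(i <- r | P i) F i).
Proof.
case=> h0 hD _ hF; elim/big_rec: _ => // i x Pi Sx; exact: hD (hF i Pi) Sx.
Qed.

Lemma spanv_mem a x : x \in a -> spanv a x.
Proof.
elim: a => [//|c a IH]; rewrite in_cons => /orP [/eqP ->|/IH h].
  apply/spanv_cons; exists 1, 0; split; first by case: (spanv_closed a).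
  by rewrite expr1n mulr1 addr0.
apply/spanv_cons; exists 0, x; split=> //.
by rewrite frob0 mulr0 add0r.
Qed.

Lemma spanv_sub a (S : K -> Prop) : pclosed S -> (forall x, x \in a -> S x) ->
  forall x, spanv a x -> S x.
Proof.
move=> hS; elim: a => [_ x /spanv_nil ->|c a IH ha x]; first by case: hS.
case/spanv_cons=> l [z [hz ->]]; case: (hS) => _ hD hZ.
apply: hD; last by apply: IH => // y hy; apply: ha; rewrite in_cons hy orbT.
by rewrite mulrC; apply: hZ; apply: ha; rewrite in_cons eqxx.
Qed.

Lemma indep_cons c a :
  indep (c :: a) <-> indep a /\ (forall l z, spanv a z -> c * l ^+ p + z = 0 -> l = 0).
Proof.
split.
- move=> H; split.
  + move=> mu hmu i hi.
    have := H (fun i => if i is i'.+1 then mu i' else 0).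
    rewrite /= big_ord_recl /= frob0 mulr0 add0r hmu => /(_ erefl i.+1); exact.
  + move=> l z [mu hz] hl.
    have := H (fun i => if i is i'.+1 then mu i' else l).
    rewrite /= big_ord_recl /= -hz hl => /(_ erefl 0%N); exact.
- case=> Ha Hc mu; rewrite /= big_ord_recl /= => hmu.
  have h0 : mu 0%N = 0.
    apply: (Hc _ (\sum_(i < size a) a`_i * mu i.+1 ^+ p)) => //.
    by exists (fun i => mu i.+1).
  move: hmu; rewrite h0 frob0 mulr0 add0r => /(Ha (fun i => mu i.+1)) H.
  by case=> [|i] //= hi; apply: H.
Qed.

Lemma indep_nil : indep [::].
Proof. by move=> mu _ i. Qed.

Lemma indep_cat a b :
  indep (a ++ b) <-> [/\ indep a, indep b &
     forall y z, spanv a y -> spanv b z -> y + z = 0 -> y = 0].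
Proof.
elim: a => [|c a IH] /=.
  split=> [h|[_ h _]] //; split=> //; by move=> y z /spanv_nil ->.
rewrite (indep_cons c (a ++ b)) IH; split.
- case=> [[ha hb hab] hc]; split=> //.
  + apply/indep_cons; split=> // l z hz; apply: hc; apply/spanv_cat; exists z, 0; split=> //.
    * by case: (spanv_closed b).
    * by rewrite addr0.
  + move=> y z /spanv_cons [l [y1 [hy1 ->]]] hz hyz.
    have hl : l = 0.
      apply: (hc l (y1 + z)); first by apply/spanv_cat; exists y1, z.
      by rewrite addrA.
    move: hyz; rewrite hl frob0 mulr0 add0r => /(hab _ _ hy1 hz).
    by move=> ->.
- case=> /indep_cons [ha hc] hb hab; split.
  + split=> // y z hy hz hyz; apply: (hab y z) => //.
    apply/spanv_cons; exists 0, y; split=> //; by rewrite frob0 mulr0 add0r.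
  + move=> l z /spanv_cat [y1 [z1 [hy1 hz1 ->]]]; rewrite addrA => h.
    apply: (hc l y1) => //; apply: (hab _ z1) => //.
    by apply/spanv_cons; exists l, y1.
Qed.

End Gen.

Section GenB.
Variables (K : fieldType) (p : nat).
Hypothesis hpK : p \in [pchar K].

Notation spanv := (@spanv K p).
Notation indep := (@indep K p).

Lemma exists_indep (a : seq K) :
  exists b, indep b /\ (forall x, spanv b x <-> spanv a x).
Proof.
elim: a => [|c a [b [hb hba]]]; first by exists [::]; split=> //; exact: indep_nil.
have hcl := spanv_closed hpK.
case: (classic (spanv b c)) => hc.
- exists b; split=> // x; split.
  + move=> /hba hx; apply/spanv_cons; exists 0, x; split=> //.
    by rewrite (frob0 hpK) mulr0 add0r.
  + case/spanv_cons=> l [z [/hba hz ->]]; case: (hcl b) => _ hD hZ.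
    by apply: hD => //; rewrite mulrC; apply: hZ.
- exists (c :: b); split.
  + apply/(indep_cons hpK); split=> // l z hz hl; case: (eqVneq l 0) => // l0; exfalso; apply: hc.
    have e : - z = c * l ^+ p by apply/eqP; rewrite eq_sym -subr_eq0 opprK hl.
    have -> : c = (l^-1) ^+ p * (- z).
      by rewrite e exprVn mulrC mulfK // expf_neq0.
    by case: (hcl b) => _ _ hZ; apply: hZ; exact: (pclosedN hpK (hcl b) hz).
  + move=> x; split.
    * case/spanv_cons=> l [z [/hba hz ->]]; apply/spanv_cons; exists l, z; split=> //.
    * case/spanv_cons=> l [z [/hba hz ->]]; apply/spanv_cons; exists l, z; split=> //.
Qed.

Definition pfl (x : K) (e : seq K) := [seq c * x ^+ j | c <- e, j <- iota 0 p].

Lemma blk_size (c x : K) : size [seq c * x ^+ j | j <- iota 0 p] = p.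
Proof. by rewrite size_map size_iota. Qed.

Lemma blk_sum (c x : K) (mu : nat -> K) :
  \sum_(i < size [seq c * x ^+ j | j <- iota 0 p]) [seq c * x ^+ j | j <- iota 0 p]`_i * mu i ^+ p
  = \sum_(j < p) c * mu j ^+ p * x ^+ j.
Proof.
rewrite blk_size; apply: eq_bigr => j _.
by rewrite (nth_map 0%N) ?size_iota // nth_iota // add0n mulrAC.
Qed.

Lemma blk_span (c x y : K) :
  spanv [seq c * x ^+ j | j <- iota 0 p] y <->
  exists mu : nat -> K, y = \sum_(j < p) c * mu j ^+ p * x ^+ j.
Proof.
split; case=> mu ->; exists mu; by rewrite blk_sum.
Qed.

Lemma pf_span (x : K) e y :
  spanv (pfl x e) y <->
  exists d : nat -> K, (forall j, (j < p)%N -> spanv e (d j)) /\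
                       y = \sum_(j < p) d j * x ^+ j.
Proof.
elim: e y => [|c e IH] y.
  rewrite /pfl /= spanv_nil; split=> [->|[d [hd ->]]].
    exists (fun _ => 0); split; first by move=> j _; apply/spanv_nil.
    by rewrite big1 // => j _; rewrite mul0r.
  by rewrite big1 // => j _; rewrite (proj1 (spanv_nil _ _) (hd j (ltn_ord j))) mul0r.
rewrite /pfl allpairs_cons -/(pfl x e) spanv_cat; split.
- case=> y1 [z1 [/blk_span [mu ->] /IH [d [hd ->]] ->]].
  exists (fun j => c * mu j ^+ p + d j); split.
    by move=> j hj; apply/spanv_cons; exists (mu j), (d j); split=> //; apply: hd.
  by rewrite -big_split; apply: eq_bigr => j _; rewrite mulrDl.
- case=> d [hd ->].
  have [f hf] := @nat_choice (K * K) (0, 0) p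
     (fun j lz => spanv e lz.2 /\ d j = c * lz.1 ^+ p + lz.2)
     (fun j hj => match proj1 (spanv_cons _ _ _ _) (hd j hj) with
                  | ex_intro l (ex_intro z h) => ex_intro _ (l, z) h end).
  exists (\sum_(j < p) c * (f j).1 ^+ p * x ^+ j), (\sum_(j < p) (f j).2 * x ^+ j).
  split.
  + by apply/blk_span; exists (fun j => (f j).1).
  + apply/IH; exists (fun j => (f j).2); split=> // j hj; exact: (hf j hj).1.
  + rewrite -big_split; apply: eq_bigr => j _.
    by rewrite (hf j (ltn_ord j)).2 mulrDl.
Qed.

Lemma indep_pf (x : K) e : indep e ->
  (forall d : nat -> K, (forall j, (j < p)%N -> spanv e (d j)) ->
     \sum_(j < p) d j * x ^+ j = 0 -> forall j, (j < p)%N -> d j = 0) ->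
  indep (pfl x e).
Proof.
elim: e => [|c e IH]; first by move=> _ _; exact: indep_nil.
move=> /(indep_cons hpK) [hie hc] hL1.
have hcl := spanv_closed hpK.
have c0 : c != 0.
  apply/eqP => c0; have := hc 1 0; rewrite c0 mul0r addr0 => /(_ _ erefl).
  by case: (hcl e) => h0 _ _ /(_ h0) /eqP; rewrite oner_eq0.
rewrite /pfl allpairs_cons -/(pfl x e); apply/(indep_cat hpK); split.
- move=> mu; rewrite blk_sum => hs i; rewrite blk_size => hi.
  have hmu : c * mu i ^+ p = 0.
    apply: (hL1 (fun j => c * mu j ^+ p)) => // j hj.
    apply/spanv_cons; exists (mu j), 0; split; last by rewrite addr0.
    by case: (hcl e).
  by move/eqP: hmu; rewrite mulf_eq0 (negPf c0) /= (frob_eq0 hpK) => /eqP.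
- apply: IH => // d hd; apply: hL1 => j hj; apply/spanv_cons; exists 0, (d j).
  by split; [apply: hd | rewrite (frob0 hpK) mulr0 add0r].
- move=> y z /blk_span [mu ->] /pf_span [d [hd ->]] hyz.
  have H := hL1 (fun j => c * mu j ^+ p + d j).
  have H2 : forall j, (j < p)%N -> mu j = 0.
    move=> j hj; apply: (hc (mu j) (d j) (hd j hj)); apply: H => //.
      by move=> i hi; apply/spanv_cons; exists (mu i), (d i); split=> //; apply: hd.
    by rewrite -[RHS]hyz -big_split; apply: eq_bigr => i _; rewrite mulrDl.
  by rewrite big1 // => j _; rewrite H2 // (frob0 hpK) mulr0 mul0r.
Qed.

End GenB.

Lemma coef_XsubC_exp (K : fieldType) (c : K) k :
  (('X - c%:P) ^+ k.+1)`_k = - (k.+1%:R * c).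
Proof.
elim: k => [|k IH]; first by rewrite expr1 coefB coefX coefC /= sub0r mul1r.
rewrite exprSr mulrBr coefB coefMX coefMC /= IH.
have := monicP (monic_exp k.+1 (monicXsubC c)).
rewrite lead_coefE size_exp_XsubC /= => ->.
by rewrite mul1r [_.+2%:R]mulrSr mulrDl mul1r opprD.
Qed.

Section Field1.
Variables (K : fieldType) (p : nat).
Hypothesis hpK : p \in [pchar K].
Variable D : K -> Prop.
Hypothesis hDadd : forall a b, D a -> D b -> D (a + b).
Hypothesis hDmul : forall a b, D a -> D b -> D (a * b).
Hypothesis hDpow : forall a, D (a ^+ p).

Lemma D0 : D 0. Proof. by rewrite -(frob0 hpK). Qed.
Lemma D1 : D 1. Proof. by rewrite -(expr1n _ p). Qed.
Lemma DN a : D a -> D (- a).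
Proof. by move=> ha; rewrite -mulN1r -(expr1n _ p) -(frobN hpK); apply: hDmul. Qed.
Lemma DB a b : D a -> D b -> D (a - b).
Proof. by move=> ha hb; apply: hDadd => //; apply: DN. Qed.
Lemma Dnat n : D n%:R. Proof. by rewrite -(frob_nat hpK). Qed.
Lemma DX a n : D a -> D (a ^+ n).
Proof. by move=> ha; elim: n => [|n IH]; [rewrite expr0; exact: D1 | rewrite exprS; apply: hDmul]. Qed.
Lemma DV a : D a -> D a^-1.
Proof.
move=> ha; case: (eqVneq a 0) => [->|a0]; first by rewrite invr0; exact: D0.
have [p' hp'] : exists p', p = p'.+1 by exists p.-1; rewrite prednK // (p_gt0 hpK).
have -> : a^-1 = a ^+ p' * (a^-1) ^+ p.
  by rewrite hp' exprVn exprS invfM mulrCA mulfV ?mulr1 // expf_neq0.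
by apply: hDmul; [apply: DX | apply: hDpow].
Qed.

Variable x : K.

Fixpoint rseq (g1 : {poly K}) (k : nat) (n : nat) : {poly K} :=
  if n is n'.+1 then 'X * rseq g1 k n' - (rseq g1 k n')`_k.-1 *: g1 else 1.

Lemma rseq_inv (g1 : {poly K}) k : (0 < k)%N -> size g1 = k.+1 -> g1`_k = 1 ->
  (forall i, D g1`_i) ->
  forall n, [/\ (size (rseq g1 k n) <= k)%N, forall i, D (rseq g1 k n)`_i &
                g1 %| 'X^n - rseq g1 k n].
Proof.
move=> k0 sg1 g1k g1D; elim=> [|n [hs hD hdv]] /=.
  split; first by rewrite size_poly1.
  + by move=> i; rewrite coefC; case: eqP => _; [exact: D1 | exact: D0].
  + by rewrite expr0 subrr dvdp0.
set r := rseq g1 k n; split.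
- apply/leq_sizeP => j hj; rewrite coefB coefXM coefZ.
  have j0 : (j == 0)%N = false by apply/negbTE; rewrite -lt0n (leq_trans k0 hj).
  rewrite j0; case: (eqVneq j k) => [->|jk].
    by rewrite g1k mulr1 subrr.
  have hj' : (k < j)%N by rewrite ltn_neqAle eq_sym jk hj.
  rewrite (nth_default 0 (_ : (size r <= j.-1)%N)); last first.
    by apply: leq_trans hs _; rewrite -ltnS prednK // (leq_ltn_trans _ hj').
  by rewrite (nth_default 0 (_ : (size g1 <= j)%N)) ?sg1 // mulr0 subrr.
- move=> i; rewrite coefB coefXM coefZ; apply: DB; last by apply: hDmul.
  by case: eqP => _; [exact: D0 | apply: hD].
- have -> : 'X^(n.+1) - ('X * r - r`_k.-1 *: g1) = 'X * ('X^n - r) + (r`_k.-1)%:P * g1.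
    by rewrite mul_polyC exprS; ring.
  by apply: dvdp_add; [apply: dvdp_mull | apply: dvdp_mull; exact: dvdpp].
Qed.

Hypothesis hxD : ~ D x.

Lemma L1core n (g : {poly K}) : (size g <= n)%N -> g != 0 -> (size g <= p)%N ->
  (forall i, D g`_i) -> root g x -> False.
Proof.
elim: n g => [|n IH] g hn g0 hgp hgD hr.
  by move: hn; rewrite leqn0 size_poly_eq0 (negPf g0).
set k := (size g).-1.
have sg : size g = k.+1 by rewrite /k prednK // size_poly_gt0.
have lc0 : lead_coef g != 0 by rewrite lead_coef_eq0.
have lcD : D (lead_coef g) by rewrite lead_coefE; apply: hgD.
have k0 : (0 < k)%N.
  rewrite lt0n; apply/negP => /eqP k0; move: hr.
  rewrite (size1_polyC (_ : (size g <= 1)%N)) ?sg ?k0 // rootC.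
  by move: lc0; rewrite lead_coefE sg k0 => /negPf ->.
set g1 := (lead_coef g)^-1 *: g.
have g1m : g1 \is monic by rewrite monicE lead_coefZ mulVf.
have sg1 : size g1 = k.+1 by rewrite size_scale ?invr_eq0.
have g1D : forall i, D g1`_i by move=> i; rewrite coefZ; apply: hDmul (DV lcD) (hgD i).
have g1r : root g1 x by rewrite rootE hornerZ (rootP hr) mulr0.
have g1k : g1`_k = 1 by have := monicP g1m; rewrite lead_coefE sg1.
have [hs hrD hdv] := rseq_inv k0 sg1 g1k g1D p.
set r := rseq g1 k p in hs hrD hdv.
have hx : r.[x] = x ^+ p.
  have := divpK hdv; move/(congr1 (fun q => q.[x])).
  rewrite hornerM (rootP g1r) mulr0 hornerD hornerN hornerXn => /eqP.
  by rewrite eq_sym subr_eq0 => /eqP.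
have hkp : (k < p)%N by rewrite -ltnS -sg.
case: (eqVneq (r - (x ^+ p)%:P) 0) => s0.
- have hr' : r = (x ^+ p)%:P by apply/eqP; rewrite -subr_eq0 s0.
  have hpP : p \in [pchar {poly K}] by rewrite pchar_poly.
  have e : ('X - x%:P) ^+ p = 'X^p - r.
    by rewrite hr' -(pFrobenius_autE hpP) rmorphB /= !(pFrobenius_autE hpP) polyC_exp.
  move: hdv; rewrite -e => /dvdp_exp_XsubCP [m hm heq].
  have eg : g1 = ('X - x%:P) ^+ m.
    by apply/eqP; rewrite -eqp_monic // monic_exp // monicXsubC.
  have mk : m = k by apply/eqP; rewrite -eqSS -sg1 eg size_exp_XsubC.
  move: k0 hkp (g1D k.-1); rewrite eg mk; case: (k) => [//|k'] _ hk'.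
  rewrite coef_XsubC_exp /= => /DN; rewrite opprK => hD'.
  apply: hxD; have nz : (k'.+1%:R : K) != 0.
    rewrite -(dvdn_pcharf hpK); apply/negP => /dvdn_leq h; move: (h erefl) hk'; rewrite leqNgt; move=> /negP; done.
  have -> : x = (k'.+1%:R)^-1 * (k'.+1%:R * x) by rewrite mulKf.
  by apply: hDmul => //; apply: DV; apply: Dnat.
- apply: (IH (r - (x ^+ p)%:P)) => //.
  + have : (size (r - (x ^+ p)%:P)%R <= k)%N.
      apply: leq_trans (size_add _ _) _; rewrite geq_max hs size_opp.
      by apply: leq_trans (size_polyC_leq1 _) k0.
    by move=> h; apply: leq_trans h _; rewrite -ltnS -sg.
  + have : (size (r - (x ^+ p)%:P)%R <= k)%N.
      apply: leq_trans (size_add _ _) _; rewrite geq_max hs size_opp.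
      by apply: leq_trans (size_polyC_leq1 _) k0.
    by move=> h; apply: leq_trans h (ltnW hkp).
  + by move=> i; rewrite coefB coefC; apply: DB => //; case: eqP => _; [apply: hDpow | exact: D0].
  + by rewrite rootE hornerD hornerN hornerC hx subrr.
Qed.

Lemma L1 (d : nat -> K) : (forall j, (j < p)%N -> D (d j)) ->
  \sum_(j < p) d j * x ^+ j = 0 -> forall j, (j < p)%N -> d j = 0.
Proof.
move=> hd hs j hj; case: (eqVneq (d j) 0) => // dj0; exfalso.
apply: (@L1core p (\poly_(i < p) d i)).
- exact: size_poly.
- apply/eqP => g0; move: dj0; have := congr1 (fun q : {poly K} => q`_j) g0.
  by rewrite coef_poly hj coef0 => ->; rewrite eqxx.
- exact: size_poly.
- by move=> i; rewrite coef_poly; case: ifP => h; [apply: hd | exact: D0].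
- by rewrite rootE horner_poly hs.
Qed.

End Field1.

Section GenD.
Variables (K : fieldType) (p : nat).
Hypothesis hpK : p \in [pchar K].

Notation spanv := (@spanv K p).
Notation indep := (@indep K p).
Notation pfl := (@pfl K p).

Definition pring (S : K -> Prop) := S 1 /\ forall a b, S a -> S b -> S (a * b).

Lemma spanv0 e : spanv e 0. Proof. by case: (spanv_closed hpK e). Qed.

Lemma pfl_embed x e c j0 : (j0 < p)%N -> spanv e c -> spanv (pfl x e) (c * x ^+ j0).
Proof.
move=> hj0 hc; apply/pf_span; exists (fun j => if j == j0 then c else 0); split.
  by move=> j _; case: eqP => _ //; apply: spanv0.
rewrite (bigD1 (Ordinal hj0)) //= eqxx big1 ?addr0 // => j hj.
rewrite (_ : (nat_of_ord j == j0) = false) ?mul0r //; apply/negbTE; move: hj.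
by apply: contra => /eqP h; apply/eqP/val_inj.
Qed.

Lemma pfl_mulx x e a : spanv (pfl x e) a -> spanv (pfl x e) (x * a).
Proof.
have [p' hp'] : exists p', p = p'.+1 by exists p.-1; rewrite prednK // (p_gt0 hpK).
case/pf_span => d [hd ->]; apply/pf_span.
exists (fun j => if j is j'.+1 then d j' else x ^+ p * d p'); split.
  case=> [|j] hj.
    by case: (spanv_closed hpK e) => _ _ hZ; apply: hZ; apply: hd; rewrite hp'.
  by apply: hd; apply: ltnW.
rewrite mulr_sumr hp' big_ord_recr big_ord_recl /= addrC; congr (_ + _).
  by rewrite expr0 mulr1 exprS; ring.
by apply: eq_bigr => j _; rewrite exprS; ring.
Qed.

Lemma pfl_mulc x e c a : pring (spanv e) -> spanv e c ->
  spanv (pfl x e) a -> spanv (pfl x e) (c * a).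
Proof.
move=> [_ hR] hc /pf_span [d [hd ->]]; apply/pf_span.
exists (fun j => c * d j); split; first by move=> j hj; apply: hR => //; apply: hd.
by rewrite mulr_sumr; apply: eq_bigr => j _; rewrite mulrA.
Qed.

Lemma pfl_pring x e : pring (spanv e) -> pring (spanv (pfl x e)).
Proof.
move=> hR; split.
  by rewrite -[1]mulr1 -(expr0 x); apply: pfl_embed; [exact: (p_gt0 hpK) | case: hR].
move=> a b /pf_span [d [hd ->]] hb.
rewrite mulr_suml; apply: (pclosed_sum _ (spanv_closed hpK _)) => j _.
rewrite -mulrA; apply: pfl_mulc => //; first by apply: hd.
elim: (nat_of_ord j) => [|n IH]; first by rewrite expr0 mul1r.
by rewrite exprS -mulrA; apply: pfl_mulx.
Qed.

Lemma pfister_build (V : K -> Prop) : pclosed p V -> pring V ->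
  forall psi : seq K, (forall y, y \in psi -> V y) ->
  exists s : seq K, [/\ indep (qpfister p s), (forall y, y \in qpfister p s -> V y),
                        pring (spanv (qpfister p s)) &
                        forall y, y \in psi -> spanv (qpfister p s) y].
Proof.
move=> hV [hV1 hVm]; elim=> [|x psi IH] hpsi.
  exists [::]; rewrite /qpfister /=; split=> //.
  - apply/(indep_cons hpK); split; first exact: indep_nil.
    move=> l z /spanv_nil -> ; rewrite mul1r addr0 => /eqP.
    by rewrite (frob_eq0 hpK) => /eqP.
  - by move=> y; rewrite inE => /eqP ->.
  - split; first by apply: spanv_mem; rewrite inE.
    move=> a b /spanv_cons [l [z [/spanv_nil -> ->]]] /spanv_cons [m [w [/spanv_nil -> ->]]].
    apply/spanv_cons; exists (l * m), 0; split; first exact/spanv_nil.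
    by rewrite !addr0 !mul1r exprMn.
have [s' [hi hVs hR hps]] : exists s : seq K, [/\ indep (qpfister p s),
   (forall y, y \in qpfister p s -> V y), pring (spanv (qpfister p s)) &
   forall y, y \in psi -> spanv (qpfister p s) y].
  by apply: IH => y hy; apply: hpsi; rewrite inE hy orbT.
have hxV : V x by apply: hpsi; rewrite inE eqxx.
case: (classic (spanv (qpfister p s') x)) => hx.
  exists s'; split=> // y; rewrite inE => /orP [/eqP -> //|]; exact: hps.
exists (x :: s'); rewrite [qpfister p (x :: s')]/= -/(qpfister p s') -/(pfl x _).
have hcl := spanv_closed hpK (qpfister p s').
split.
- apply: indep_pf => // d hd hs.
  apply: (L1 hpK (D := spanv (qpfister p s'))) hx d hd hs.
  + by case: hcl.
  + by case: hR.
  + move=> a; rewrite -[_ ^+ p]mulr1; case: hcl => _ _ hZ; apply: hZ; by case: hR.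
- move=> y /allpairsP [[c j] [/= hc hj ->]]; apply: (hVm); first exact: hVs.
  by elim: (j) => [|n IHn]; [rewrite expr0 | rewrite exprS; apply: (hVm)].
- exact: pfl_pring.
- move=> y; rewrite inE => /orP [/eqP ->|hy].
    have h := pfl_embed x (prime_gt1 (p_prime hpK)) (proj1 hR).
    by rewrite mul1r expr1 in h.
  have h := pfl_embed x (p_gt0 hpK) (hps y hy).
  by rewrite expr0 mulr1 in h.
Qed.

Lemma qform0 (a : seq K) : qform p (0 : 'rV_(size a)) = 0.
Proof. by rewrite /qform big1 // => i _; rewrite mxE (frob0 hpK) mulr0. Qed.

Lemma qformB (a : seq K) (u v : 'rV_(size a)) : qform p (u - v) = qform p u - qform p v.
Proof.
rewrite /qform -sumrB; apply: eq_bigr => i _.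
by rewrite !mxE (frobD hpK) (frobN hpK) mulrDr mulrN.
Qed.

Lemma qform_mul (a b : seq K) (M : 'M_(size a, size b)) :
  (forall i, qform p (row i M) = a`_i) -> forall v, qform p (v *m M) = qform p v.
Proof.
move=> hM v; rewrite /qform.
transitivity (\sum_(j < size b) \sum_(i < size a) b`_j * ((v 0 i) ^+ p * (M i j) ^+ p)).
  apply: eq_bigr => j _; rewrite !mxE (frob_sum hpK) mulr_sumr.
  by apply: eq_bigr => i _; rewrite exprMn.
rewrite exchange_big; apply: eq_bigr => i _.
rewrite -(hM i) /qform mulr_suml; apply: eq_bigr => j _; rewrite mxE; ring.
Qed.

Lemma iso_from (psi e : seq K) : indep psi -> indep e ->
  (forall y, y \in psi -> spanv e y) -> (forall y, y \in e -> spanv psi y) ->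
  qisometric p psi e.
Proof.
move=> hpsi he hpe hep.
have hM : forall i : 'I_(size psi), exists v : 'rV_(size e), qform p v = psi`_i.
  by move=> i; apply/qvalueE; apply: hpe; apply: mem_nth.
have hN : forall i : 'I_(size e), exists v : 'rV_(size psi), qform p v = e`_i.
  by move=> i; apply/qvalueE; apply: hep; apply: mem_nth.
have [f hf] := fin_all_exists hM.
have [g hg] := fin_all_exists hN.
pose M := \matrix_(i, j) f i 0 j.
pose N := \matrix_(i, j) g i 0 j.
have hMi : forall i, qform p (row i M) = psi`_i.
  by move=> i; rewrite -(hf i); congr qform; apply/rowP => j; rewrite !mxE.
have hNi : forall i, qform p (row i N) = e`_i.
  by move=> i; rewrite -(hg i); congr qform; apply/rowP => j; rewrite !mxE.
have isoM := qform_mul hMi.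
have isoN := qform_mul hNi.
have ape := proj2 (qanisoE p psi) hpsi.
have ae := proj2 (qanisoE p e) he.
exists M; split=> //.
- rewrite -kermx_eq0; apply/eqP/row_matrixP => i; rewrite row0.
  apply: ape; rewrite -isoM -row_mul mulmx_ker row0; exact: qform0.
- have NM : N *m M = 1%:M.
    apply/row_matrixP => i; rewrite !rowE mulmx1 mulmxA.
    set w := delta_mx 0 i; apply/eqP; rewrite -subr_eq0; apply/eqP; apply: ae.
    by rewrite qformB isoM isoN subrr.
  rewrite /row_full eqn_leq rank_leq_col /=.
  by rewrite -{1}(mxrank1 K (size e)) -NM mxrankM_maxr.
Qed.

End GenD.

Lemma natr_neq0 (K : fieldType) p (hp : p \in [pchar K]) m :
  (0 < m)%N -> (m < p)%N -> (m%:R : K) != 0.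
Proof.
move=> m0 mp; rewrite -(dvdn_pcharf hp); apply/negP => hd.
by have := dvdn_leq m0 hd; rewrite leqNgt mp.
Qed.

Lemma fact_neq0 (K : fieldType) p (hp : p \in [pchar K]) m :
  (m < p)%N -> (m`!%:R : K) != 0.
Proof.
elim: m => [|m IH] hm; first by rewrite fact0 oner_eq0.
have h1 : (m.+1%:R : K) != 0 := natr_neq0 hp (ltn0Sn m) hm.
have h2 := IH (ltnW hm).
by rewrite factS natrM mulf_neq0.
Qed.

Lemma VX (L : fieldType) p (hp : p \in [pchar L]) (U : L -> Prop) :
  pclosed p U -> forall n, (n <= p)%N -> forall y : nat -> L,
  (forall t, (t < n)%N -> U (\sum_(i < n) y i * (t%:R) ^+ i)) ->
  forall i, (i < n)%N -> U (y i).
Proof.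
move=> hU n hn y hy i hi.
pose a : 'rV[L]_n := \row_(t < n) (t%:R : L).
pose A := Vandermonde n a.
pose Y : 'rV[L]_n := \row_j y j.
have hA : A \in unitmx.
  rewrite unitmxE det_Vandermonde unitfE; apply/prodf_neq0 => j _.
  apply/prodf_neq0 => k hjk; rewrite !mxE -natrB ?(ltnW hjk) //.
  apply: (natr_neq0 hp); first by rewrite subn_gt0.
  exact: leq_ltn_trans (leq_subr j k) (leq_trans (ltn_ord k) hn).
have hY : Y = (Y *m A) *m invmx A by rewrite mulmxK.
have -> : y i = Y 0 (Ordinal hi) by rewrite mxE.
rewrite hY mxE; apply: (pclosed_sum _ hU) => t _.
have hAf : map_mx (pFrobenius_aut hp) A = A.
  apply/matrixP => r c; rewrite !mxE /= (pFrobenius_autE hp) -exprM mulnC exprM.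
  by rewrite (frob_nat hp).
have hfix : (invmx A) t (Ordinal hi) ^+ p = (invmx A) t (Ordinal hi).
  move: (map_invmx (pFrobenius_aut hp) A); rewrite hAf => /matrixP /(_ t (Ordinal hi)).
  by rewrite mxE /=.
rewrite -hfix mulrC; case: hU => _ _ hZ; apply: hZ.
have := hy t (ltn_ord t); congr U; rewrite mxE; apply: eq_bigr => j _.
by rewrite !mxE.
Qed.

Lemma keyG (p : nat) (F : fieldType) (hp : p \in [pchar F]) (hp2 : (2 < p)%N)
  (W G : F -> Prop) (hW : pclosed p W) (hG : pclosed p G) (W1 : W 1)
  (P : {poly F}) (hPp : forall i : nat, exists c : F, P`_i = c ^+ p)
  (hdeg : (3 <= size P <= p)%N)
  (hGd : forall b, W b -> forall i, (i < size P)%N -> G (P^`N(i)).[b]) :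
  forall b c, W b -> W c -> G (b * c).
Proof.
have hGinv : forall w x, w != 0 -> G (w ^+ p * x) -> G x.
  move=> w x w0 h; have -> : x = (w^-1) ^+ p * (w ^+ p * x).
    by rewrite mulrA -exprMn mulVf // expr1n mul1r.
  by case: hG => _ _ hZ; apply: hZ.
have [k hk] : exists k, size P = k.+3 by exists (size P - 3)%N; lia.
have hkp : (k.+2 < p)%N by lia.
have W0 : W 0 by case: hW.
have expand : forall m b, (k <= m)%N ->
    (P^`N(m)).[b] = \sum_(i < 3) (P`_(m + i) *+ 'C(m + i, m)) * b ^+ i.
  move=> m b hm; rewrite (@horner_coef_wide _ 3).
    by apply: eq_bigr => i _; rewrite coef_nderivn.
  apply/leq_sizeP => j hj; rewrite coef_nderivn nth_default ?mul0rn //. rewrite hk; lia.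
have Pz : P`_(k.+3) = 0 by rewrite nth_default // hk.
have [c2 hc2] := hPp k.+2.
have c20 : c2 != 0.
  apply/eqP => c20; have : lead_coef P != 0 by rewrite lead_coef_eq0 -size_poly_gt0 hk.
  by rewrite lead_coefE hk /= hc2 c20 expr0n eqn0Ngt (p_gt0 hp) eqxx.
have Geq : forall a b, G a -> a = b -> G b by move=> a b h <-.
have hk1 : (k.+1 < size P)%N by rewrite hk.
have hk0 : (k < size P)%N by rewrite hk; lia.
have Ga : forall x, W x -> G x.
  move=> x hx.
  have h := pclosedB hp hG (hGd x hx k.+1 hk1) (hGd 0 W0 k.+1 hk1).
  apply: (hGinv (c2 * k.+2%:R)); first by rewrite mulf_neq0 // (natr_neq0 hp).
  move: h; rewrite !expand // !big_ord_recr !big_ord0 /= !addn0 addn1 addn2 Pz binn binSn.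
  move=> h; apply: (Geq _ _ h); rewrite hc2 exprMn (frob_nat hp); ring.
have [c1 hc1] := hPp k.+1.
have hC2 : ('C(k.+2, k)%:R : F) != 0.
  have := bin_fact (leqW (leqnSn k)); move/(congr1 (fun n => (n%:R : F))).
  rewrite natrM => e; apply/eqP => c0; move: e; rewrite c0 mul0r => /esym /eqP.
  by rewrite (negPf (fact_neq0 hp hkp)).
have Gb : forall x, W x -> G (x ^+ 2).
  move=> x hx.
  have h := pclosedB hp hG (hGd x hx k hk0) (hGd 0 W0 k hk0).
  have h2 : G ((c1 * k.+1%:R) ^+ p * x) by case: hG => _ _ hZ; apply: hZ; apply: Ga.
  have h3 := pclosedB hp hG h h2.
  apply: (hGinv (c2 * 'C(k.+2, k)%:R)); first by rewrite mulf_neq0.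
  move: h3; rewrite !expand // !big_ord_recr !big_ord0 /= !addn0 addn1 addn2 binn binSn.
  move=> h4; apply: (Geq _ _ h4); rewrite hc1 hc2 !exprMn !(frob_nat hp); ring.
move=> b c hb hc.
have hbc : W (b + c) by case: hW => _ hD _; apply: hD.
have h := pclosedB hp hG (pclosedB hp hG (Gb _ hbc) (Gb _ hb)) (Gb _ hc).
apply: (hGinv 2%:R); first by rewrite (natr_neq0 hp).
by apply: (Geq _ _ h); rewrite (frob_nat hp); ring.
Qed.

Lemma ring_V (p : nat) (F : fieldType) (hp : p \in [pchar F]) (hp2 : (2 < p)%N)
  (phi : seq F) (h1 : qvalue p phi 1)
  (L : fieldType) (iota : {rmorphism F -> L})
  (P : {poly F}) (hPp : forall i : nat, exists c : F, P`_i = c ^+ p)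
  (hdeg : (3 <= size P <= p)%N)
  (alpha : L) (halpha : qvalue p (qext iota phi) alpha) (halpha0 : alpha != 0)
  (hval : forall b : F, qvalue p phi b -> qvalue p (qext iota phi) (alpha * iota P.[b])) :
  pring (spanv p (map iota phi)).
Proof.
have hpL : p \in [pchar L] := rmorph_pchar iota hp.
set V := spanv p (map iota phi).
set W := spanv p phi.
have hV : pclosed p V := spanv_closed hpL (map iota phi).
have hW : pclosed p W := spanv_closed hp phi.
have hiW : forall b, W b -> V (iota b).
  move=> b [mu ->]; exists (fun i => iota (mu i)); rewrite rmorph_sum size_map.
  by apply: eq_bigr => i _; rewrite rmorphM rmorphXn (nth_map 0).
have W1 : W 1 by apply/qvalueE.
have hV1 : V 1 by rewrite -(rmorph1 iota); apply: hiW.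
pose G := fun x : F => V (alpha * iota x).
have hG : pclosed p G.
  case: hV => h0 hD hZ; split.
  - by rewrite /G rmorph0 mulr0.
  - by move=> x y hx hy; rewrite /G rmorphD mulrDr; apply: hD.
  - by move=> c x hx; rewrite /G rmorphM rmorphXn mulrCA; apply: hZ.
have hWadd : forall b c, W b -> W c -> W (b + c) by case: hW.
have hWnat : forall t : nat, W t%:R.
  move=> t; rewrite -[t%:R]mulr1 -(frob_nat hp); case: hW => _ _ hZ; exact: hZ.
have hGP : forall b, W b -> G P.[b].
  by move=> b /qvalueE /hval /qvalueE.
have hGd : forall b, W b -> forall i, (i < size P)%N -> G (P^`N(i)).[b].
  move=> b hb.
  apply: (VX hpL hV (proj2 (andP hdeg)) (y := fun i => alpha * iota (P^`N(i)).[b])).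
  move=> t ht; have := hGP (b + t%:R) (hWadd _ _ hb (hWnat t)).
  rewrite /G (nderiv_taylor _ (mulrC b t%:R)) rmorph_sum mulr_sumr.
  by congr V; apply: eq_bigr => i _; rewrite rmorphM rmorphXn rmorph_nat mulrA.
have hGW := keyG hp hp2 hW hG W1 hPp hdeg hGd.
have hAVV : forall y z, V y -> V z -> V (alpha * y * z).
  have step1 : forall b, b \in phi -> forall z, V z -> V (alpha * iota b * z).
    move=> b hb; apply: (spanv_sub (S := fun z => V (alpha * iota b * z))).
      case: hV => h0 hD hZ; split.
      - by rewrite mulr0.
      - by move=> x y hx hy; rewrite mulrDr; apply: hD.
      - by move=> c x hx; rewrite mulrCA; apply: hZ.
    move=> z /mapP [c hc ->]; rewrite -mulrA -rmorphM.
    by apply: hGW; apply: (spanv_mem hp).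
  move=> y z hy hz; move: y hy z hz.
  apply: (spanv_sub (S := fun y => forall z, V z -> V (alpha * y * z))).
    case: hV => h0 hD hZ; split.
    - by move=> z _; rewrite mulr0 mul0r.
    - by move=> x y hx hy z hz; rewrite mulrDr mulrDl; apply: hD; [apply: hx | apply: hy].
    - by move=> c x hx z hz; rewrite mulrCA -mulrA; apply: hZ; apply: hx.
  by move=> y /mapP [b hb ->]; apply: step1.
have haV : forall z, V z -> V (alpha * z).
  by move=> z hz; rewrite -[alpha * z]mulr1; apply: hAVV.
have hXV : forall m z, V z -> V (alpha ^+ m * z).
  move=> m z hz; elim: m => [|m IH]; first by rewrite expr0 mul1r.
  by rewrite exprS -mulrA; apply: haV.
have [p' hp'] : exists p', p = p'.+1 by exists p.-1; rewrite prednK // (p_gt0 hp).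
have hinv : forall z, V z -> V (alpha^-1 * z).
  move=> z hz; have -> : alpha^-1 * z = (alpha^-1) ^+ p * (alpha ^+ p' * z).
    rewrite hp' mulrA; congr (_ * _); rewrite exprVn exprS invfM -mulrA mulVf ?mulr1 // expf_neq0 //.
  by case: hV => _ _ hZ; apply: hZ; apply: hXV.
split=> // y z hy hz.
have -> : y * z = alpha^-1 * (alpha * y * z) by rewrite -mulrA mulKf.
by apply: hinv; apply: hAVV.
Qed.

Unset Implicit Arguments.

Theorem mainTheorem11 (p : nat) (F : fieldType) (hp : p \in [pchar F]) (hp2 : (2 < p)%N)
  (phi : seq F) (hphi : (0 < size phi)%N) (h1 : qvalue p phi 1)
  (L : fieldType) (iota : {rmorphism F -> L})
  (P : {poly F}) (hPp : forall i : nat, exists c : F, P`_i = c ^+ p)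
  (hdeg : (3 <= size P <= p)%N)
  (alpha : L) (halpha : qvalue p (qext iota phi) alpha) (halpha0 : alpha != 0)
  (hval : forall b : F, qvalue p phi b -> qvalue p (qext iota phi) (alpha * iota P.[b])) :
  (exists psi : seq L, [/\ (0 < size psi)%N, qaniso p psi &
       forall x, qvalue p psi x <-> qvalue p (qext iota phi) x]) /\
  (forall psi : seq L, (0 < size psi)%N -> qaniso p psi ->
     (forall x, qvalue p psi x <-> qvalue p (qext iota phi) x) ->
     exists s : seq L, qisometric p psi (qpfister p s)).
Proof.
have hpL : p \in [pchar L] := rmorph_pchar iota hp.
have hR := ring_V hp hp2 h1 hPp hdeg halpha halpha0 hval.
have hV : pclosed p (spanv p (map iota phi)) := spanv_closed hpL _.
have hVq : forall x, qvalue p (qext iota phi) x <-> spanv p (map iota phi) x.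
  by move=> x; exact: (qvalueE p (map iota phi) x).
split.
- have [b [hb hbV]] := exists_indep hpL (map iota phi).
  exists b; split.
  + case: b hb hbV => [|c b] // _ hbV; exfalso.
    by have := (proj2 (hbV 1)) (proj1 hR); move=> /spanv_nil /eqP; rewrite oner_eq0.
  + exact/qanisoE.
  + move=> x; split.
    * by move=> /qvalueE /hbV /hVq.
    * by move=> /hVq /hbV /qvalueE.
- move=> psi hpsi0 hpsi hpsiV.
  have hpsiV' : forall y, y \in psi -> spanv p (map iota phi) y.
    move=> y hy; apply/hVq; apply/hpsiV; apply/qvalueE; exact: spanv_mem hpL _ _ hy.
  have [s [he heV _ hps]] := pfister_build hpL hV hR hpsiV'.
  exists s; apply: (iso_from hpL) => //.
  + exact/qanisoE.
  + by move=> y hy; apply/qvalueE; apply/hpsiV; apply/hVq; apply: heV.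
Qed.
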